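(* Let $K\subset\mathbb{R}^n$ and $C\subset\mathbb{R}^m$ be nonempty, convex, closed and bounded sets, and let $f,h:\mathbb{R}^n\times\mathbb{R}^m\to\mathbb{R}$ be continuous functions such that, for every $y\in K$, $f(y,\cdot)$ and $h(y,\cdot)$ are convex, and such that $f$ takes only positive values. Let $\varepsilon>0$ and $y\in K$. Then the problem $\min\{h(y,z)+\varepsilon f^2(y,z)\mid z\in C\}$ admits at least one solution, i.e. $\mathcal{S}_\varepsilon(y)\neq\emptyset$, where $\mathcal{S}_\varepsilon(y)=\operatorname{argmin}\{h(y,z)+\varepsilon f^2(y,z)\mid z\in C\}$. Moreover, there exists a constant $\kappa_y\in\mathbb{R}$ such that $f(y,x)=\kappa_y$ for all $x\in\mathcal{S}_\varepsilon(y)$.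
   Context: $f^2(y,z)$ denotes $(f(y,z))^2$. *)

(* Defs.v *)
From HB Require Import structures.
From mathcomp Require Import all_boot all_order all_algebra.
From mathcomp Require Import all_classical all_reals all_analysis.
Set Implicit Arguments. Unset Strict Implicit. Unset Printing Implicit Defensive.
Import Order.TTheory GRing.Theory Num.Theory.
Import numFieldNormedType.Exports.
Local Open Scope classical_set_scope.
Local Open Scope ring_scope.

Definition is_convex_set (R : realType) (V : lmodType R) (A : set V) : Prop :=
  forall x y : V, A x -> A y -> forall t : R, 0 <= t -> t <= 1 ->
    A (t *: x + (1 - t) *: y).

Definition is_convex_fun (R : realType) (V : lmodType R) (g : V -> R) : Prop :=
  forall x y : V, forall t : R, 0 <= t -> t <= 1 ->
    g (t *: x + (1 - t) *: y) <= t * g x + (1 - t) * g y.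

Definition argmin_on (T : Type) (R : realType) (g : T -> R) (A : set T) : set T :=
  [set z | A z /\ forall w, A w -> g z <= g w].

Definition S_eps (R : realType) (n m : nat)
  (f h : 'rV[R]_n * 'rV[R]_m -> R) (C : set 'rV[R]_m) (eps : R) (y : 'rV[R]_n)
  : set 'rV[R]_m :=
  argmin_on (fun z => h (y, z) + eps * (f (y, z)) ^+ 2) C.

(* Main.v *)
Require Import Defs.
From HB Require Import structures.
From mathcomp Require Import all_boot all_order all_algebra.
From mathcomp Require Import all_classical all_reals all_analysis.
From mathcomp Require Import ring lra.
Import Order.TTheory GRing.Theory Num.Theory.
Import numFieldNormedType.Exports.
Local Open Scope classical_set_scope.
Local Open Scope ring_scope.

Lemma arith (R : realFieldType) (a b c h1 h0 hm eps : R) : 0 < eps -> 0 < c ->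
  c <= 1/2 * a + (1 - 1/2) * b -> hm <= 1/2 * h1 + (1 - 1/2) * h0 ->
  h1 + eps * a ^+ 2 <= hm + eps * c ^+ 2 -> h0 + eps * b ^+ 2 <= hm + eps * c ^+ 2 ->
  a = b.
Proof.
move=> he hc hf hh g1 g2.
have hab : c <= (a + b) / 2 by lra.
have c2 : c ^+ 2 <= ((a + b) / 2) ^+ 2.
  by rewrite ler_pXn2r ?nnegrE //; lra.
have e2 : eps * c ^+ 2 <= eps * ((a + b) / 2) ^+ 2 by rewrite ler_wpM2l // ltW.
have id : eps * (a - b) ^+ 2 = 2 * (eps * a ^+ 2) + 2 * (eps * b ^+ 2) - 4 * (eps * ((a + b) / 2) ^+ 2) by field.
have : eps * (a - b) ^+ 2 <= 0 by rewrite id; lra.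
rewrite pmulr_rle0 // => sq.
have : (a - b) ^+ 2 = 0 by apply/le_anti; rewrite sq sqr_ge0.
by move/eqP; rewrite sqrf_eq0 subr_eq0 => /eqP.
Qed.

Theorem lemma2p1 (R : realType) (n m : nat)
  (K : set 'rV[R]_n) (C : set 'rV[R]_m)
  (f h : 'rV[R]_n * 'rV[R]_m -> R)
  (K0 : K !=set0) (Kc : is_convex_set K) (Kcl : closed K) (Kb : bounded_set K)
  (C0 : C !=set0) (Cc : is_convex_set C) (Ccl : closed C) (Cb : bounded_set C)
  (fc : continuous f) (hc : continuous h)
  (fcvx : forall y, K y -> is_convex_fun (fun z => f (y, z)))
  (hcvx : forall y, K y -> is_convex_fun (fun z => h (y, z)))
  (fpos : forall p, 0 < f p)
  (eps : R) (heps : 0 < eps) (y : 'rV[R]_n) (hy : K y) :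
  S_eps f h C eps y !=set0 /\
  exists kappa : R, forall x, S_eps f h C eps y x -> f (y, x) = kappa.
Proof.
split.
  have pc : continuous (fun z : 'rV[R]_m => (y, z)).
    move=> z; have := @cvg_pair _ _ _ (nbhs z) (nbhs y) (nbhs z) _ _ _ (fun=> y) id (cvg_cst y) cvg_id.
    exact.
  have G : continuous (fun p => h p + eps * f p ^+ 2).
    move=> p; apply: cvgD; [exact: hc| apply: cvgM; [exact: cvg_cst| rewrite expr2; apply: cvgM; exact: fc]].
  have gc : continuous (fun z => h (y, z) + eps * (f (y, z)) ^+ 2).
    exact: (fun z => continuous_comp (pc z) (G _)).
  have [c cC cmin] := EVT_min_rV C0 (bounded_closed_compact Cb Ccl)
     (continuous_subspaceT gc).
  exists c; split; first by rewrite inE in cC.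
  by move=> w wC; apply: cmin; rewrite inE.
case: (pselect (S_eps f h C eps y !=set0)) => [[x0 Sx0]|N]; last first.
  exists 0 => x Sx; exfalso; apply: N; by exists x.
exists (f (y, x0)) => x1 [x1C x1m].
case: Sx0 => x0C x0m.
pose mid := (1/2 : R) *: x1 + (1 - 1/2) *: x0.
have midC : C mid by apply: Cc => //; lra.
have hf := fcvx y hy x1 x0 (1/2) ltac:(lra) ltac:(lra).
have hh := hcvx y hy x1 x0 (1/2) ltac:(lra) ltac:(lra).
have g1 := x1m _ midC. have g2 := x0m _ midC.
have g3 := x1m _ x0C. have g4 := x0m _ x1C.
rewrite -/mid /= in hf hh g1 g2 g3 g4.
have cp := fpos (y, mid).
move: hf hh g1 g2 g3 g4 cp.
set a := f (y, x1); set b := f (y, x0); set c := f (y, mid).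
set h1 := h (y, x1); set h0 := h (y, x0); set hm := h (y, mid).
move=> hf hh g1 g2 g3 g4 cp.
have := @arith R a b c h1 h0 hm eps heps cp.
move=> /(_ hf).
move=> /(_ hh).
move=> /(_ g1 g2).
exact.
Qed.
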